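(* Let $(\Lambda,d)$ be a finitely aligned $k$-graph. Then $S_\Lambda$, with the multiplication $FG:=\bigcup_{(\lambda,\mu)\in F,(\xi,\eta)\in G}\{(\lambda\alpha,\eta\beta):(\alpha,\beta)\in\Lambda^{\min}(\mu,\xi)\}$, is an inverse semigroup, with involution given by $F^*:=\{(\mu,\lambda):(\lambda,\mu)\in F\}$; that is, for each $F\in S_\Lambda$, $F^*$ is the unique $G\in S_\Lambda$ with $FGF=F$ and $GFG=G$.
   Context: A $k$-graph $(\Lambda,d)$ is a countable small category $\Lambda$ (objects identified with identity morphisms) with a functor $d:\Lambda\to\mathbb N^k$ satisfying unique factorization: whenever $d(\lambda)=m+n$ there are unique $\mu,\nu$ with $d(\mu)=m$, $d(\nu)=n$, $\lambda=\mu\nu$. $r,s$ are range/source. $\Lambda^{\min}(\lambda,\mu)=\{(\alpha,\beta):\lambda\alpha=\mu\beta,\ d(\lambda\alpha)=d(\lambda)\vee d(\mu)\}$ ($\vee$ coordinatewise max); finitely aligned means all these sets are finite. $\Lambda*_s\Lambda=\{(\lambda,\mu):s(\lambda)=s(\mu)\}$. $S_\Lambda$ is the collection of finite $F\subseteq\Lambda*_s\Lambda$ such that distinct $(\lambda,\mu),(\nu,\omega)\in F$ satisfy $\Lambda^{\min}(\lambda,\nu)=\emptyset$ and $\Lambda^{\min}(\mu,\omega)=\emptyset$; the given product is an associative operation on $S_\Lambda$. *)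

(* Defs.v *)
From mathcomp Require Import all_boot.
From mathcomp Require Import boolp classical_sets cardinality.
Set Implicit Arguments. Unset Strict Implicit. Unset Printing Implicit Defensive.
Local Open Scope classical_set_scope.

(* A k-graph (Lambda, d): a countable small category whose objects are
   identified with identity morphisms, with a degree functor d : Lambda -> N^k
   (degrees are functions 'I_k -> nat with pointwise operations) satisfying
   unique factorisation.  Composition is partial: [comp l m = Some n] means
   l m is defined (s(l) = r(m)) and equals n. *)
Record kgraph (k : nat) := KGraph {
  Mor : countType;
  rng : Mor -> Mor;
  src : Mor -> Mor;
  comp : Mor -> Mor -> option Mor;
  deg : Mor -> 'I_k -> nat;
  rng_rng : forall l, rng (rng l) = rng l;
  src_rng : forall l, src (rng l) = rng l;
  rng_src : forall l, rng (src l) = src l;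
  src_src : forall l, src (src l) = src l;
  comp_defined : forall l m, src l = rng m -> exists n, comp l m = Some n;
  comp_dom : forall l m n, comp l m = Some n ->
    [/\ src l = rng m, rng n = rng l & src n = src m];
  comp_idl : forall l, comp (rng l) l = Some l;
  comp_idr : forall l, comp l (src l) = Some l;
  comp_assoc : forall a b c ab bc, comp a b = Some ab -> comp b c = Some bc ->
    comp ab c = comp a bc;
  deg_comp : forall l m n, comp l m = Some n ->
    forall i, deg n i = deg l i + deg m i;
  unique_fact : forall l (m n : 'I_k -> nat), (forall i, deg l i = m i + n i) ->
    exists! p : Mor * Mor,
      [/\ forall i, deg p.1 i = m i, forall i, deg p.2 i = n i
        & comp p.1 p.2 = Some l]
}.

Section KGraphDefs.
Variables (k : nat) (L : kgraph k).
Local Notation M := (Mor L).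
Local Notation d := (@deg k L).

Definition Lmin (l m : M) : set (M * M) :=
  [set p | exists n, [/\ comp l p.1 = Some n, comp m p.2 = Some n &
                         forall i, d n i = maxn (d l i) (d m i)]].

Definition finitely_aligned : Prop := forall l m : M, finite_set (Lmin l m).

Definition S_Lambda : set (set (M * M)) :=
  [set F | [/\ finite_set F,
              (forall p, F p -> src p.1 = src p.2) &
              (forall p q, F p -> F q -> p <> q ->
                 Lmin p.1 q.1 = set0 /\ Lmin p.2 q.2 = set0)]].

Definition Smul (F G : set (M * M)) : set (M * M) :=
  [set p | exists l m x e a b,
     [/\ F (l, m), G (x, e), Lmin m x (a, b),
         comp l a = Some p.1 & comp e b = Some p.2]].

Definition Sstar (F : set (M * M)) : set (M * M) := [set p | F (p.2, p.1)].

End KGraphDefs.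

Arguments Lmin {k} L _ _.
Arguments finitely_aligned {k} L.
Arguments S_Lambda {k} L.
Arguments Smul {k L} F G.
Arguments Sstar {k L} F.

(* Main.v *)
Require Import Defs.
From mathcomp Require Import all_boot.
From mathcomp Require Import boolp classical_sets cardinality.
From mathcomp Require Import zify.
Local Open Scope classical_set_scope.
Set Implicit Arguments. Unset Strict Implicit. Unset Printing Implicit Defensive.

Notation cmp := Defs.comp.

Lemma factorP k (L : kgraph k) (n : Mor L) (u v : 'I_k -> nat) :
  (forall i, deg n i = u i + v i) ->
  exists p q, [/\ forall i, deg p i = u i, forall i, deg q i = v i & cmp p q = Some n].
Proof.
move=> H; have [[p q] [[/= H1 H2 H3] _]] := unique_fact H.
by exists p, q.
Qed.

Lemma L2 k (L : kgraph k) (a b a' b' n : Mor L) :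
  cmp a b = Some n -> cmp a' b' = Some n -> (forall i, deg a i = deg a' i) ->
  a = a' /\ b = b'.
Proof.
move=> Hab Ha'b' Hd.
have Hb : forall i, deg b i = deg b' i.
  move=> i; have := deg_comp Hab i; have := deg_comp Ha'b' i; rewrite Hd; lia.
have [p [_ U]] := unique_fact (fun i => deg_comp Hab i).
have E1 := U (a, b) (And3 (fun i => erefl) (fun i => erefl) Hab).
have E2 := U (a', b') (And3 (fun i => esym (Hd i)) (fun i => esym (Hb i)) Ha'b').
by move: E2; rewrite E1 => -[-> ->].
Qed.

Lemma L1 k (L : kgraph k) (a b c n : Mor L) :
  cmp a b = Some n -> cmp a c = Some n -> b = c.
Proof. by move=> H1 H2; case: (L2 H1 H2 (fun i => erefl)). Qed.

Lemma deg_rng0 k (L : kgraph k) (l : Mor L) i : deg (rng l) i = 0.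
Proof. have := deg_comp (comp_idl l) i; lia. Qed.

Lemma deg_src0 k (L : kgraph k) (l : Mor L) i : deg (src l) i = 0.
Proof. have := deg_comp (comp_idr l) i; lia. Qed.

Lemma L4 k (L : kgraph k) (g : Mor L) : (forall i, deg g i = 0) -> g = rng g.
Proof.
move=> H.
have H0 : forall i, deg g i = (fun _ => 0) i + (fun _ => 0) i by move=> i; rewrite H.
have [p [_ U]] := unique_fact H0.
have E1 := U (rng g, g) (And3 (fun i => deg_rng0 g i) H (comp_idl g)).
have E2 := U (g, src g) (And3 H (fun i => deg_src0 g i) (comp_idr g)).
by move: E2; rewrite E1 => -[->].
Qed.

Lemma assoc_ex k (L : kgraph k) (a b c ab abc : Mor L) :
  cmp a b = Some ab -> cmp ab c = Some abc ->
  exists bc, cmp b c = Some bc /\ cmp a bc = Some abc.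
Proof.
move=> H1 H2; have [_ _ s1] := comp_dom H1; have [s2 _ _] := comp_dom H2.
have [bc Hbc] : exists bc, cmp b c = Some bc by apply: comp_defined; rewrite -s1.
by exists bc; split => //; rewrite -(comp_assoc H1 Hbc).
Qed.

Lemma assoc_ex' k (L : kgraph k) (a b c bc abc : Mor L) :
  cmp b c = Some bc -> cmp a bc = Some abc ->
  exists ab, cmp a b = Some ab /\ cmp ab c = Some abc.
Proof.
move=> H1 H2; have [_ r1 _] := comp_dom H1; have [s2 _ _] := comp_dom H2.
have [ab Hab] : exists ab, cmp a b = Some ab by apply: comp_defined; rewrite s2.
by exists ab; split => //; rewrite (comp_assoc Hab H1).
Qed.

Lemma L3 k (L : kgraph k) (m g x h n : Mor L) :
  cmp m g = Some n -> cmp x h = Some n ->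
  exists a b e, [/\ Lmin L m x (a, b), cmp a e = Some g & cmp b e = Some h].
Proof.
move=> Hmg Hxh.
pose D i := maxn (deg m i) (deg x i).
have [p1 [p2 [Hp1 Hp2 Hp]]] := @factorP _ L n D (fun i => deg n i - D i)
   (fun i => ltac:(have := deg_comp Hmg i; have := deg_comp Hxh i; rewrite /D; lia)).
have [m' [a [Hm' Ha Hm'a]]] := @factorP _ L p1 (deg m) (fun i => D i - deg m i)
   (fun i => ltac:(rewrite Hp1 /D; lia)).
have [x' [b [Hx' Hb Hx'b]]] := @factorP _ L p1 (deg x) (fun i => D i - deg x i)
   (fun i => ltac:(rewrite Hp1 /D; lia)).
have [ap [Hap Hm'ap]] := assoc_ex Hm'a Hp.
have [bp [Hbp Hx'bp]] := assoc_ex Hx'b Hp.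
have [E1 E2] := L2 Hm'ap Hmg Hm'. have [E3 E4] := L2 Hx'bp Hxh Hx'.
subst. exists a, b, p2; split => //.
by exists p1; split.
Qed.
Definition Rel k (L : kgraph k) (F : set (Mor L * Mor L)) (x y : Mor L) :=
  exists l m g, [/\ F (l, m), cmp m g = Some x & cmp l g = Some y].

Lemma S_ce2 k (L : kgraph k) F (p q : Mor L * Mor L) g h n :
  S_Lambda L F -> F p -> F q -> cmp p.2 g = Some n -> cmp q.2 h = Some n -> p = q.
Proof.
move=> [_ _ HD] Fp Fq H1 H2; have [//|pq] := pselect (p = q).
have [_ E] := HD _ _ Fp Fq pq.
have [a [b [e [Hm _ _]]]] := L3 H1 H2.
by move: Hm; rewrite E.
Qed.

Lemma S_ce1 k (L : kgraph k) F (p q : Mor L * Mor L) g h n :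
  S_Lambda L F -> F p -> F q -> cmp p.1 g = Some n -> cmp q.1 h = Some n -> p = q.
Proof.
move=> [_ _ HD] Fp Fq H1 H2; have [//|pq] := pselect (p = q).
have [E _] := HD _ _ Fp Fq pq.
have [a [b [e [Hm _ _]]]] := L3 H1 H2.
by move: Hm; rewrite E.
Qed.

Lemma Rel_fun k (L : kgraph k) F (x y y' : Mor L) :
  S_Lambda L F -> Rel F x y -> Rel F x y' -> y = y'.
Proof.
move=> SF [l [m [g [Fp H1 H2]]]] [l' [m' [g' [Fp' H1' H2']]]].
have [E1 E2] : (l, m) = (l', m') by apply: (S_ce2 SF Fp Fp' H1 H1').
subst; have E := L1 H1 H1'; subst g'.
by move: H2'; rewrite H2 => -[].
Qed.

Lemma Rel_inj k (L : kgraph k) F (x x' y : Mor L) :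
  S_Lambda L F -> Rel F x y -> Rel F x' y -> x = x'.
Proof.
move=> SF [l [m [g [Fp H1 H2]]]] [l' [m' [g' [Fp' H1' H2']]]].
have [E1 E2] : (l, m) = (l', m') by apply: (S_ce1 SF Fp Fp' H2 H2').
subst; have E := L1 H2 H2'; subst g'.
by move: H1'; rewrite H1 => -[].
Qed.

Lemma RelM k (L : kgraph k) (F G : set (Mor L * Mor L)) x z :
  Rel (Smul F G) x z <-> exists y, Rel G x y /\ Rel F y z.
Proof.
split.
  move=> [p1 [p2 [g [[l [m [x0 [e [a [b [Fp Gp [n0 [Hma Hxb _]] Hla Heb]]]]]]] Hx Hz]]]] /=.
  simpl in *.
  have [bg [Hbg Hebg]] := assoc_ex Heb Hx.
  have [ag [Hag Hlag]] := assoc_ex Hla Hz.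
  have [y Hy] : exists y, cmp x0 bg = Some y.
    apply: comp_defined; have [-> _ _] := comp_dom Hxb.
    by have [_ -> _] := comp_dom Hbg.
  exists y; split; first by exists x0, e, bg.
  exists l, m, ag; split => //.
  by rewrite -(comp_assoc Hma Hag) (comp_assoc Hxb Hbg).
move=> [y [[x0 [e [g1 [Gp He Hx0]]]] [l [m [g2 [Fp Hm Hl]]]]]].
have [a [b [e' [HL Ha Hb]]]] := L3 Hm Hx0.
have [la Hla] : exists la, cmp l a = Some la.
  apply: comp_defined; have [-> _ _] := comp_dom Hl; by have [_ -> _] := comp_dom Ha.
have [eb Heb] : exists eb, cmp e b = Some eb.
  apply: comp_defined; have [-> _ _] := comp_dom He; by have [_ -> _] := comp_dom Hb.
exists la, eb, e'; split.
- by exists l, m, x0, e, a, b; split.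
- by rewrite (comp_assoc Heb Hb).
- by rewrite (comp_assoc Hla Ha).
Qed.

Lemma faithful_sub k (L : kgraph k) (F G : set (Mor L * Mor L)) :
  S_Lambda L F -> S_Lambda L G -> (forall x y, Rel F x y <-> Rel G x y) ->
  forall p, F p -> G p.
Proof.
move=> SF SG H [la mu] Fp.
have srcF := SF; case: srcF => _ HsF _; have Hs := HsF _ Fp; simpl in Hs.
have RF : Rel F mu la.
  exists la, mu, (src mu); split => //; first exact: comp_idr.
  by rewrite -Hs; exact: comp_idr.
have [xi [eta [ga [Gp H1 H2]]]] := (H _ _).1 RF.
have srcG := SG; case: srcG => _ HsG _; have Hs' := HsG _ Gp; simpl in Hs'.
have RG : Rel G eta xi.
  exists xi, eta, (src eta); split => //; first exact: comp_idr.
  by rewrite -Hs'; exact: comp_idr.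
have [la' [mu' [de [Fp' H3 H4]]]] := (H _ _).2 RG.
have [dg [Hdg Hmu]] := assoc_ex H3 H1.
have E : (la, mu) = (la', mu').
  by apply: (S_ce2 SF Fp Fp' (comp_idr mu) Hmu).
case: E => ? ?; subst la' mu'.
have E := L1 (comp_idr mu) Hmu.
have dga : forall i, deg ga i = 0.
  by move=> i; have := deg_comp Hdg i; rewrite -E deg_src0; lia.
have Ega := L4 dga.
have [_ r1 _] := comp_dom H1.
have [_ r2 _] := comp_dom H2.
have [s1 _ _] := comp_dom H1.
have [s2 _ _] := comp_dom H2.
have E1 : mu = eta.
  by move: H1; rewrite Ega -s1 comp_idr => -[].
have E2 : la = xi.
  by move: H2; rewrite Ega -s2 comp_idr => -[].
by rewrite E1 E2.
Qed.

Lemma faithful k (L : kgraph k) (F G : set (Mor L * Mor L)) :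
  S_Lambda L F -> S_Lambda L G -> (forall x y, Rel F x y <-> Rel G x y) -> F = G.
Proof.
move=> SF SG H; apply/funext => p; apply/propext; split.
  exact: faithful_sub.
apply: faithful_sub => // x y; exact: iff_sym.
Qed.

Lemma Smul_core k (L : kgraph k) (m x a b a' b' n0 n0' g h y : Mor L) :
  Lmin L m x (a, b) -> Lmin L m x (a', b') ->
  cmp m a = Some n0 -> cmp x b = Some n0 -> cmp m a' = Some n0' -> cmp x b' = Some n0' ->
  cmp n0 g = Some y -> cmp n0' h = Some y -> [/\ a = a', b = b' & g = h].
Proof.
move=> [c [Hc1 Hc2 Hc3]] [c' [Hc1' Hc2' Hc3']] Hma Hxb Hma' Hxb' Hg Hh.
move: Hc1 Hc2 Hc3 Hc1' Hc2' Hc3' => /=; rewrite Hma Hxb Hma' => -[<-] _ Hd [<-] _ Hd'.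
have [E1 E2] := L2 Hg Hh (fun i => etrans (Hd i) (esym (Hd' i))).
subst; split => //; [exact: L1 Hma Hma' | exact: L1 Hxb Hxb'].
Qed.

Lemma Smul_key k (L : kgraph k) (F G : set (Mor L * Mor L)) p q g h n :
  S_Lambda L F -> S_Lambda L G -> Smul F G p -> Smul F G q ->
  (cmp p.1 g = Some n /\ cmp q.1 h = Some n) \/
  (cmp p.2 g = Some n /\ cmp q.2 h = Some n) -> p = q.
Proof.
move=> SF SG [l [m [x [e [a [b [Fp Gp HL Hla Heb]]]]]]]
  [l' [m' [x' [e' [a' [b' [Fp' Gp' HL' Hla' Heb']]]]]]].
have [n0 [Hma Hxb _]] := HL. have [n0' [Hma' Hxb' _]] := HL'.
simpl in *.
have fin : forall (g h y : Mor L), (l, m) = (l', m') -> (x, e) = (x', e') ->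
    cmp n0 g = Some y -> cmp n0' h = Some y -> p = q.
  move=> g0 h0 y E1 E2 H1 H2; case: E1 => ? ?; case: E2 => ? ?; subst.
  have [? ? ?] := Smul_core HL HL' Hma Hxb Hma' Hxb' H1 H2; subst.
  case: p q Hla Heb Hla' Heb' => [p1 p2] [q1 q2] /=.
  by move=> -> -> [->] [->].
case=> [[H1 H2]|[H1 H2]].
- have [ag [Hag Hlag]] := assoc_ex Hla H1.
  have [ag' [Hag' Hlag']] := assoc_ex Hla' H2.
  have E1 : (l, m) = (l', m') by apply: (S_ce1 SF Fp Fp' Hlag Hlag').
  case: (E1) => ? ?; subst l' m'.
  have E := L1 Hlag Hlag'; subst ag'.
  have [y Hy] : exists y, cmp m ag = Some y.
    apply: comp_defined; have [-> _ _] := comp_dom Hma; by have [_ -> _] := comp_dom Hag.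
  have Hn0 : cmp n0 g = Some y by rewrite (comp_assoc Hma Hag).
  have Hn0' : cmp n0' h = Some y by rewrite (comp_assoc Hma' Hag').
  have [bg [Hbg Hxbg]] := assoc_ex Hxb Hn0.
  have [bh [Hbh Hxbh]] := assoc_ex Hxb' Hn0'.
  have E2 : (x, e) = (x', e') by apply: (S_ce1 SG Gp Gp' Hxbg Hxbh).
  exact: fin E1 E2 Hn0 Hn0'.
- have [bg [Hbg Hebg]] := assoc_ex Heb H1.
  have [bg' [Hbg' Hebg']] := assoc_ex Heb' H2.
  have E2 : (x, e) = (x', e') by apply: (S_ce2 SG Gp Gp' Hebg Hebg').
  case: (E2) => ? ?; subst x' e'.
  have E := L1 Hebg Hebg'; subst bg'.
  have [y Hy] : exists y, cmp x bg = Some y.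
    apply: comp_defined; have [-> _ _] := comp_dom Hxb; by have [_ -> _] := comp_dom Hbg.
  have Hn0 : cmp n0 g = Some y by rewrite (comp_assoc Hxb Hbg).
  have Hn0' : cmp n0' h = Some y by rewrite (comp_assoc Hxb' Hbg').
  have [ag [Hag Hmag]] := assoc_ex Hma Hn0.
  have [ah [Hah Hmah]] := assoc_ex Hma' Hn0'.
  have E1 : (l, m) = (l', m') by apply: (S_ce2 SF Fp Fp' Hmag Hmah).
  exact: fin E1 E2 Hn0 Hn0'.
Qed.

Lemma Smul_S k (L : kgraph k) (F G : set (Mor L * Mor L)) :
  finitely_aligned L -> S_Lambda L F -> S_Lambda L G -> S_Lambda L (Smul F G).
Proof.
move=> FA SF SG; have SF' := SF; have SG' := SG.
case: SF' => finF srcF _; case: SG' => finG srcG _.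
split.
- pose hf (fg : (Mor L * Mor L) * (Mor L * Mor L)) (ab : Mor L * Mor L) :=
    (odflt ab.1 (cmp fg.1.1 ab.1), odflt ab.2 (cmp fg.2.2 ab.2)).
  apply: (@sub_finite_set _ _ (\bigcup_(fg in F `*` G) (hf fg) @` Lmin L fg.1.2 fg.2.1)).
    move=> p [l [m [x [e [a [b [Fp Gp HL Hla Heb]]]]]]].
    exists ((l, m), (x, e)) => //.
    exists (a, b) => //; rewrite /hf /= Hla Heb; by case: p Hla Heb.
  apply: bigcup_finite; first exact: finite_setX.
  by move=> fg _; apply: finite_image; apply: FA.
- move=> p [l [m [x [e [a [b [Fp Gp [n0 [Hma Hxb _]] Hla Heb]]]]]]].
  have [_ _ ->] := comp_dom Hla; have [_ _ ->] := comp_dom Heb.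
  have [_ _ <-] := comp_dom Hma; by have [_ _ <-] := comp_dom Hxb.
- move=> p q Hp Hq pq; split; apply/funext => -[c d]; apply/propext; split => //=.
  + move=> [n [H1 H2 _]]; apply: pq; apply: (Smul_key SF SG Hp Hq); left; split; eassumption.
  + move=> [n [H1 H2 _]]; apply: pq; apply: (Smul_key SF SG Hp Hq); right; split; eassumption.
Qed.

Lemma Sstar_S k (L : kgraph k) (F : set (Mor L * Mor L)) :
  S_Lambda L F -> S_Lambda L (Sstar F).
Proof.
move=> [finF srcF HD]; split.
- apply: (@sub_finite_set _ _ ((fun p => (p.2, p.1)) @` F)); last exact: finite_image.
  by move=> [p1 p2] Hp; exists (p2, p1).
- by move=> [p1 p2] Hp; rewrite /= (srcF _ Hp).
- move=> [p1 p2] [q1 q2] Hp Hq pq.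
  have [] := HD _ _ Hp Hq; first by move=> -[? ?]; apply: pq; subst.
  by move=> /= -> ->.
Qed.

Lemma Rel_star k (L : kgraph k) (F : set (Mor L * Mor L)) x y :
  Rel (Sstar F) x y <-> Rel F y x.
Proof.
split; move=> [l [m [g [Fp H1 H2]]]]; exists m, l, g; split => //.
Qed.

Lemma Sstar_invol k (L : kgraph k) (F : set (Mor L * Mor L)) : Sstar (Sstar F) = F.
Proof. by apply/funext => -[p1 p2]. Qed.

Lemma FFsF k (L : kgraph k) (F : set (Mor L * Mor L)) :
  finitely_aligned L -> S_Lambda L F -> Smul (Smul F (Sstar F)) F = F.
Proof.
move=> FA SF; have SsF := Sstar_S SF.
apply: faithful => //; first by do 2 apply: Smul_S => //.
move=> x z; rewrite RelM; split.
- move=> [y [Hxy /RelM [w [/Rel_star Hwy Hwz]]]].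
  have E := Rel_inj SF Hwy Hxy; subst w; exact: Hwz.
- move=> Hxz; exists z; split => //; apply/RelM; exists x; split => //.
  exact/Rel_star.
Qed.

Theorem proposition4p4 (k : nat) (hk : 0 < k) (L : kgraph k) :
  finitely_aligned L ->
  (* S_Lambda is closed under the product, which is associative *)
  (forall F G, S_Lambda L F -> S_Lambda L G -> S_Lambda L (Smul F G)) /\
  (forall F G H, S_Lambda L F -> S_Lambda L G -> S_Lambda L H ->
     Smul (Smul F G) H = Smul F (Smul G H)) /\
  (* inverse semigroup: F^* is the unique G in S_Lambda with FGF = F, GFG = G *)
  (forall F, S_Lambda L F ->
     [/\ S_Lambda L (Sstar F),
         Smul (Smul F (Sstar F)) F = F,
         Smul (Smul (Sstar F) F) (Sstar F) = Sstar F &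
         forall G, S_Lambda L G -> Smul (Smul F G) F = F ->
           Smul (Smul G F) G = G -> G = Sstar F]).
Proof.
move=> FA; split; first by move=> F G; exact: Smul_S.
split.
  move=> F G H SF SG SH.
  apply: faithful; try by repeat apply: Smul_S.
  move=> x z; rewrite !RelM; split.
  - move=> [y [Hxy /RelM [w [Hyw Hwz]]]].
    exists w; split => //; apply/RelM; by exists y.
  - move=> [w [/RelM [y [Hxy Hyw]] Hwz]].
    exists y; split => //; apply/RelM; by exists w.
move=> F SF; have SsF := Sstar_S SF; split => //.
- exact: FFsF.
- by have := FFsF FA SsF; rewrite Sstar_invol.
move=> G SG E1 E2.
apply: faithful => // x y.
have RF : forall a b, Rel F a b <-> Rel (Smul (Smul F G) F) a b by move=> a b; rewrite E1.
have RG : forall a b, Rel G a b <-> Rel (Smul (Smul G F) G) a b by move=> a b; rewrite E2.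
rewrite Rel_star; split.
- move=> Hxy; have := (RG _ _).1 Hxy => /RelM [c [Hxc /RelM [e [Hce Hey]]]].
  have E := Rel_fun SG Hxc Hxy; subst c.
  have E := Rel_inj SG Hey Hxy; subst e.
  exact: Hce.
- move=> Hyx; have := (RF _ _).1 Hyx => /RelM [c [Hyc /RelM [e [Hce Hex]]]].
  have E := Rel_fun SF Hyc Hyx; subst c.
  have E := Rel_inj SF Hex Hyx; subst e.
  exact: Hce.
Qed.
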